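(* Let $\mathcal{X}$ be a finite alphabet with $|\mathcal{X}|\ge 2$, let $P$ be a pmf on $\mathcal{X}$, and let $X_0,X_1,X_2,\dots$ be i.i.d. with law $P$. Let $e:\mathcal{X}\to\{0,1\}^*$ be a prefix-free code with codeword lengths $\ell(x)=|e(x)|\ge 1$, and let $L=\ell(X)$ with $X\sim P$. For the memoryless update scheme defined in the context, the average age satisfies, almost surely, $$\bar A(e)=\mathbb{E}[L]+\frac{\mathbb{E}[L^2]}{2\,\mathbb{E}[L]}-\frac12 .$$
   Context: Memoryless update scheme: the transmitter sends one bit per unit time over a noiseless channel. Set $s_0=0$ and recursively $s_k=s_{k-1}+\ell(X_{s_{k-1}})$ for $k\ge1$: at time $s_{k-1}$ the channel is free, the transmitter takes the current symbol $X_{s_{k-1}}$, and its codeword $e(X_{s_{k-1}})$ is completely received at time $s_k$; symbols $X_t$ arriving while the channel is busy are never sent. The receiver's time index is $U(t)=0$ for $0\le t<s_1$ and $U(t)=s_{k-1}$ for $s_k\le t<s_{k+1}$, $k\ge1$ (i.e. the receiver outputs the most recent fully received symbol, which was observed at time $U(t)$). The age is $A(t)=t-U(t)$ and the average age is $\bar A(e)=\limsup_{T\to\infty}\frac1T\sum_{t=1}^T A(t)$. *)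

(* Defs.v *)
From HB Require Import structures.
From mathcomp Require Import all_boot all_order all_algebra.
From mathcomp Require Import all_classical all_reals all_analysis.
Set Implicit Arguments. Unset Strict Implicit. Unset Printing Implicit Defensive.
Import Order.TTheory GRing.Theory Num.Theory.
Local Open Scope classical_set_scope.
Local Open Scope ring_scope.

Section AoI.
Variable X : finType.

Definition prefix_free (e : X -> seq bool) : Prop :=
  forall x y, x != y -> ~~ prefix (e x) (e y).

Definition codelen (e : X -> seq bool) (x : X) : nat := size (e x).

(* transmission completion times, along a fixed realisation xs of the source:
   s_0 = 0, s_k = s_{k-1} + l(x_{s_{k-1}}) *)
Fixpoint sched (e : X -> seq bool) (xs : nat -> X) (k : nat) : nat :=
  match k with
  | 0 => 0
  | k.+1 => sched e xs k + codelen e (xs (sched e xs k))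
  end.

(* index k of the last completed transmission at time t: the largest k with
   s_k <= t (since l >= 1, s_k >= k, so k <= t). *)
Definition last_done (e : X -> seq bool) (xs : nat -> X) (t : nat) : nat :=
  (\max_(k < t.+1 | (sched e xs k <= t)%N) k)%N.

(* receiver time index U(t): 0 if t < s_1, s_{k-1} if s_k <= t < s_{k+1} *)
Definition recv_index (e : X -> seq bool) (xs : nat -> X) (t : nat) : nat :=
  sched e xs (last_done e xs t).-1.

Definition age (e : X -> seq bool) (xs : nat -> X) (t : nat) : nat :=
  t - recv_index e xs t.

(* (1/T) sum_{t=1}^T A(t), as a sequence in T (value at T = 0 irrelevant) *)
Definition avg_age_seq (R : realType) (e : X -> seq bool) (xs : nat -> X)
  (T : nat) : \bar R :=
  ((\sum_(1 <= t < T.+1) (age e xs t)%:R) / T%:R : R)%:E.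

Definition avg_age (R : realType) (e : X -> seq bool) (xs : nat -> X) : \bar R :=
  limn_esup (avg_age_seq R e xs).

End AoI.

Definition mutually_indep {d : measure_display} {T : measurableType d}
  {R : realType} (X : finType) (Pr : probability T R) (Xs : nat -> T -> X) : Prop :=
  forall (S : seq nat) (A : nat -> set X), uniq S ->
    Pr (\bigcap_(i in [set` S]) (Xs i @^-1` A i)) =
    (\prod_(i <- S) Pr (Xs i @^-1` A i))%E.

(* Main.v *)
Require Import Defs.
From HB Require Import structures.
From mathcomp Require Import all_boot all_order all_algebra.
From mathcomp Require Import all_classical all_reals all_analysis.
From mathcomp Require Import ring lra zify.
Import Order.TTheory GRing.Theory Num.Theory.

Module PA.
Set Implicit Arguments. Unset Strict Implicit. Unset Printing Implicit Defensive.
Local Open Scope ring_scope.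

Section ExDef.
Variables (R : realFieldType) (B : finType) (Q : B -> R).

Fixpoint Ex (n : nat) (F : seq B -> R) : R :=
  match n with
  | 0 => F [::]
  | n'.+1 => \sum_b Q b * Ex n' (fun s => F (b :: s))
  end.

Lemma Ex_ext n F G : (forall s, size s = n -> F s = G s) -> Ex n F = Ex n G.
Proof.
elim: n F G => [|n IH] F G H /=; first by apply: H.
by apply: eq_bigr => b _; congr (_ * _); apply: IH => s Hs; apply: H => /=; rewrite Hs.
Qed.

Lemma Ex_add n F G : Ex n (fun s => F s + G s) = Ex n F + Ex n G.
Proof.
elim: n F G => [|n IH] F G //=; rewrite -big_split /=.
by apply: eq_bigr => b _; rewrite IH mulrDr.
Qed.

Lemma Ex_scale n a F : Ex n (fun s => a * F s) = a * Ex n F.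
Proof.
elim: n F => [|n IH] F //=; rewrite mulr_sumr.
by apply: eq_bigr => b _; rewrite IH mulrCA.
Qed.

Hypothesis Q0 : forall b, 0 <= Q b.
Hypothesis Q1 : \sum_b Q b = 1.

Lemma Ex_cst n c : Ex n (fun _ => c) = c.
Proof.
elim: n => [|n IH] //=.
under eq_bigr do rewrite IH; by rewrite -mulr_suml Q1 mul1r.
Qed.

Lemma Ex_le n F G : (forall s, F s <= G s) -> Ex n F <= Ex n G.
Proof.
elim: n F G => [|n IH] F G H /=; first exact: H.
apply: ler_sum => b _; apply: ler_wpM2l => //; exact: IH.
Qed.

Lemma Ex_ge0 n F : (forall s, 0 <= F s) -> 0 <= Ex n F.
Proof. by move=> H; rewrite -(Ex_cst n 0); apply: Ex_le. Qed.

Variable Z : B -> R.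
Hypothesis Zc : \sum_b Q b * Z b = 0.
Let v := \sum_b Q b * Z b ^+ 2.
Let m4 := \sum_b Q b * Z b ^+ 4.
Let S (s : seq B) := \sum_(b <- s) Z b.

Lemma Ex_S1 n : Ex n S = 0.
Proof.
elim: n => [|n IH] /=; first by rewrite /S big_nil.
rewrite -[RHS]Zc; apply: eq_bigr => b _.
rewrite (Ex_ext (G := fun s => Z b + S s)); last by move=> s _; rewrite /S big_cons.
by rewrite Ex_add Ex_cst IH addr0.
Qed.

Lemma Ex_S2 n : Ex n (fun s => S s ^+ 2) = n%:R * v.
Proof.
elim: n => [|n IH] /=; first by rewrite /S big_nil expr0n mul0r.
transitivity (\sum_b Q b * (Z b ^+ 2 + n%:R * v)).
  apply: eq_bigr => b _; congr (_ * _).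
  rewrite (Ex_ext (G := fun s => Z b ^+ 2 + (2 * Z b * S s + S s ^+ 2))); last first.
    by move=> s _; rewrite /S big_cons; ring.
  by rewrite !Ex_add Ex_cst Ex_scale Ex_S1 IH mulr0 add0r.
under eq_bigr do rewrite mulrDr. rewrite big_split /= -/v -mulr_suml Q1 mul1r -natr1; ring.
Qed.

Lemma Ex_S4 n : Ex n (fun s => S s ^+ 4) <= n%:R * m4 + 3 * (n%:R ^+ 2) * v ^+ 2.
Proof.
have v0 : 0 <= v by apply: sumr_ge0 => b _; apply: mulr_ge0 => //; apply: sqr_ge0.
elim: n => [|n IH] /=.
  by rewrite /S big_nil expr0n mul0r expr0n /= mulr0 mul0r addr0.
set E3 := Ex n (fun s => S s ^+ 3).
set E4 := Ex n (fun s => S s ^+ 4).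
have -> : \sum_b Q b * Ex n (fun s => S (b :: s) ^+ 4) =
   \sum_b Q b * (Z b ^+ 4 + 6 * n%:R * v * Z b ^+ 2 + E4) + 4 * E3 * (\sum_b Q b * Z b).
  rewrite mulr_sumr -big_split /=; apply: eq_bigr => b _.
  rewrite (Ex_ext (G := fun s => Z b ^+ 4 + (4 * Z b ^+ 3 * S s + (6 * Z b ^+ 2 * S s ^+ 2
     + (4 * Z b * S s ^+ 3 + S s ^+ 4))))); last first.
    by move=> s _; rewrite /S big_cons; ring.
  rewrite !Ex_add Ex_cst !Ex_scale Ex_S1 Ex_S2 -/E3 -/E4; ring.
rewrite Zc mulr0 addr0.
under eq_bigr do rewrite !mulrDr.
rewrite !big_split /= -/m4 -mulr_suml Q1 mul1r.
have -> : \sum_b Q b * (6 * n%:R * v * Z b ^+ 2) = 6 * n%:R * v * v.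
  transitivity (6 * n%:R * v * (\sum_b Q b * Z b ^+ 2)); last by [].
  by rewrite mulr_sumr; apply: eq_bigr => b _; ring.
rewrite -natr1.
have : E4 <= n%:R * m4 + 3 * n%:R ^+ 2 * v ^+ 2 := IH.
have n0 : 0 <= n%:R :> R by [].
nra.
Qed.

End ExDef.

Section Dev.
Variables (R : realFieldType) (B : finType) (Q : B -> R).
Hypothesis Q0 : forall b, 0 <= Q b.
Hypothesis Q1 : \sum_b Q b = 1.
Variable g : B -> R.
Definition Emean := \sum_b Q b * g b.
Definition Kdev := \sum_b Q b * (g b - Emean) ^+ 4 +
   3 * (\sum_b Q b * (g b - Emean) ^+ 2) ^+ 2.

Lemma Ex_dev n (eps : R) : 0 < eps -> (0 < n)%N ->
  Ex Q n (fun s => ((eps * n%:R <= `|\sum_(b <- s) g b - n%:R * Emean|)%R)%:R)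
   <= Kdev / (eps ^+ 4 * n%:R ^+ 2).
Proof.
move=> e0 n0.
set Z := fun b => g b - Emean.
have Zc : \sum_b Q b * Z b = 0.
  rewrite /Z; under eq_bigr do rewrite mulrBr.
  by rewrite sumrB -mulr_suml Q1 mul1r subrr.
set c := eps * n%:R.
have c0 : 0 < c by rewrite mulr_gt0 // ltr0n.
rewrite (@Ex_ext _ _ Q n _ (fun s => ((c <= `|\sum_(b <- s) Z b|)%R)%:R)); last first.
  move=> s Hs; rewrite /Z big_split /= sumrN; congr (((c <= `|_ + _|)%R)%:R).
  by rewrite big_const_seq count_predT Hs iter_addr_0 mulr_natl.
apply: (le_trans (y := Ex Q n (fun s => c ^-1 ^+ 4 * (\sum_(b <- s) Z b) ^+ 4))) => //.
  apply: (Ex_le Q0) => s.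
  set S := \sum_(b <- s) Z b.
  have S4 : 0 <= S ^+ 4 by rewrite (_ : 4 = 2 * 2)%N // exprM sqr_ge0.
  have ci : 0 < c ^-1 ^+ 4 by rewrite exprn_gt0 // invr_gt0.
  case: (boolP (c <= `|S|)) => H /=; last by rewrite mulr_ge0 // ltW.
  rewrite exprVn ler_pdivlMl ?exprn_gt0 // mulr1.
  have -> : S ^+ 4 = `|S| ^+ 4 by rewrite -normrX ger0_norm.
  by rewrite ler_pXn2r // nnegrE ?normr_ge0 // ltW.
rewrite Ex_scale.
have := Ex_S4 Q0 Q1 Zc n.
rewrite /Kdev -/Z.
set m4 := \sum_b _ * _ ^+ 4. set v := \sum_b _ * _ ^+ 2.
move=> H4.
have m40 : 0 <= m4 by apply: sumr_ge0 => b _; rewrite mulr_ge0 // (_ : 4 = 2 * 2)%N // exprM sqr_ge0.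
have nR : 1 <= n%:R :> R by rewrite ler1n.
set E := Ex _ _ _ in H4 *.
have A0 : 0 < eps ^+ 4 * n%:R ^+ 2 by rewrite mulr_gt0 // exprn_gt0 // (lt_le_trans _ nR).
have -> : c ^-1 ^+ 4 * E = E / ((eps ^+ 4 * n%:R ^+ 2) * n%:R ^+ 2).
  by rewrite /c; field; rewrite ?gt_eqF // ?(lt_le_trans _ nR).

rewrite ler_pdivrMr ?mulr_gt0 ?exprn_gt0 ?(lt_le_trans _ nR) //.
have -> : (m4 + 3 * v ^+ 2) / (eps ^+ 4 * n%:R ^+ 2) * (eps ^+ 4 * n%:R ^+ 2 * n%:R ^+ 2)
   = (m4 + 3 * v ^+ 2) * n%:R ^+ 2.
  by field; rewrite !gt_eqF // ?(lt_le_trans _ nR) ?exprn_gt0 // (lt_le_trans _ nR).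
have v0 : 0 <= v ^+ 2 by rewrite sqr_ge0.
apply: (le_trans H4).
have : n%:R * m4 <= n%:R ^+ 2 * m4.
  by rewrite ler_wpM2r // expr2 ler_peMl // (le_trans ler01 nR).
lra.
Qed.
End Dev.

Section Tuples.
Variables (R : realFieldType) (B : finType) (Q : B -> R).

Fixpoint tuples n : seq (seq B) :=
  if n is n'.+1 then [seq b :: s | b <- enum B, s <- tuples n'] else [:: [::]].

Lemma mem_tuples n s : (s \in tuples n) = (size s == n).
Proof.
elim: n s => [|n IH] s /=; first by rewrite inE; case: s.
apply/allpairsP/idP => [[[x y] /= [_ Hy ->]]|]; first by rewrite /= eqSS -IH.
by case: s => [|b s] //= Hs; exists (b, s); rewrite mem_enum IH.
Qed.

Lemma uniq_tuples n : uniq (tuples n).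
Proof.
elim: n => [|n IH] //=; apply: allpairs_uniq => //; first exact: enum_uniq.
by move=> [x s] [y t] _ _ /= [-> ->].
Qed.

Lemma Ex_tuples n F : Ex Q n F = \sum_(s <- tuples n) (\prod_(b <- s) Q b) * F s.
Proof.
elim: n F => [|n IH] F /=; first by rewrite big_seq1 big_nil mul1r.
rewrite big_allpairs_dep /= -big_enum /=.
apply: eq_bigr => b _; rewrite IH mulr_sumr; apply: eq_bigr => s _.
by rewrite big_cons mulrA.
Qed.

Definition unpair (s : seq (B * B)) : seq B := flatten [seq [:: p.1; p.2] | p <- s].

Lemma Ex_pair n F : Ex Q n.*2 F = Ex (fun p => Q p.1 * Q p.2) n (fun s => F (unpair s)).
Proof.
elim: n F => [|n IH] F //=.
transitivity (\sum_x \sum_y Q x * Q y * Ex Q n.*2 (fun s => F [:: x, y & s])).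
  by apply: eq_bigr => x _; rewrite mulr_sumr; apply: eq_bigr => y _; rewrite mulrA.
by rewrite pair_big /=; apply: eq_bigr => [[x y]] _; rewrite IH.
Qed.

End Tuples.

End PA.
Import PA.

Module PD.
Set Implicit Arguments. Unset Strict Implicit. Unset Printing Implicit Defensive.
Local Open Scope classical_set_scope.
Local Open Scope ring_scope.

Lemma psum_sq (R : realType) N : \sum_(k < N.+1) ((k.+1)%:R ^+ 2)^-1 <= 2 - (N.+1)%:R^-1 :> R.
Proof.
elim: N => [|N IH]; first by rewrite big_ord_recr big_ord0 /= add0r expr1n invr1; lra.
rewrite big_ord_recr /=.
set a := (N.+1)%:R : R.
have a1 : 1 <= a by rewrite ler1n.
have -> : (N.+2)%:R = a + 1 :> R by rewrite -natr1.
have h : ((a + 1) ^+ 2)^-1 <= a^-1 - (a + 1)^-1.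
  have -> : a^-1 - (a+1)^-1 = (a * (a + 1))^-1 by field; apply/andP; split; rewrite gt_eqF //; lra.
  rewrite lef_pV2 ?posrE ?exprn_gt0 ?mulr_gt0 //; try lra.
have IH' : \sum_(k < N.+1) ((k.+1)%:R ^+ 2)^-1 <= 2 - a^-1 := IH.
by apply: le_trans (lerD IH' h) _; rewrite addrA subrK.
Qed.

Lemma series_inv_sq (R : realType) (C : R) : 0 <= C ->
  (\sum_(k <oo) ((C / (k.+1)%:R ^+ 2)%:E) < +oo)%E.
Proof.
move=> C0.
have ge0 : forall k, (0 <= (C / (k.+1)%:R ^+ 2)%:E)%E.
  by move=> k; rewrite lee_fin divr_ge0 // sqr_ge0.
apply: (@le_lt_trans _ _ (2 * C)%:E); last exact: ltry.
have nd := @ereal_nondecreasing_series _ (fun k => (C / (k.+1)%:R ^+ 2)%:E) xpredT 0%N (fun n _ _ => ge0 n).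
rewrite (cvg_lim _ (ereal_nondecreasing_cvgn nd)) //.
apply: ub_ereal_sup => _ [N _ <-] /=.
rewrite sumEFin lee_fin.
case: N => [|N]; first by rewrite big_geq // mulr_ge0.
rewrite big_mkord -mulr_sumr mulrC ler_wpM2r //.
apply: le_trans (psum_sq R N) _.
rewrite lerBlDr lerDl; done.
Qed.

Lemma BC d (T : measurableType d) (R : realType) (mu : {measure set T -> \bar R})
  (F : nat -> set T) (C : R) :
  0 <= C -> (forall k, measurable (F k)) ->
  (forall k, (mu (F k) <= (C / (k.+1)%:R ^+ 2)%:E)%E) ->
  mu.-negligible [set w | ~ exists N, forall k, (N <= k)%N -> ~ F k w].
Proof.
move=> C0 mF HF.
apply: (@negligibleS _ _ _ _ (lim_sup_set F)).
  move=> w /= Hw n _; apply: contrapT => H; apply: Hw; exists n => k Hk Fk.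
  by apply: H; exists k.
apply/negligibleP.
  by apply: bigcap_measurable => // k _; exact: bigcup_measurable.
apply: lim_sup_set_cvg0 => //.
apply: le_lt_trans (series_inv_sq C0).
apply: lee_nneseries => // i _ _; exact: measure_ge0.
Qed.

End PD.
Import PD.

Module PC.
Set Implicit Arguments. Unset Strict Implicit. Unset Printing Implicit Defensive.
Local Open Scope ring_scope.

Section Det.
Variables (X : finType) (e : X -> seq bool) (xs : nat -> X).
Hypothesis l1 : forall x, (1 <= codelen e x)%N.
Local Notation s := (sched e xs).
Definition lk k := codelen e (xs (s k)).

Lemma sS k : s k.+1 = (s k + lk k)%N. Proof. by []. Qed.

Lemma s_lt k : (s k < s k.+1)%N.
Proof. by rewrite sS; have := l1 (xs (s k)); rewrite /lk; lia. Qed.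

Lemma s_mono i j : (i <= j)%N -> (s i <= s j)%N.
Proof.
move=> /subnK <-; elim: (j - i)%N => [|m IH] //.
by rewrite addSn (leq_trans IH) // ltnW // s_lt.
Qed.

Lemma s_ge k : (k <= s k)%N.
Proof. by elim: k => [|k IH] //; rewrite (leq_ltn_trans IH) // s_lt. Qed.

Lemma cycle_ex t : exists k, (s k <= t < s k.+1)%N.
Proof.
elim: t => [|t [k /andP [H1 H2]]]; first by exists 0%N; apply/andP; split => //; exact: (s_lt 0).
case: (ltnP t.+1 (s k.+1)) => H3.
  by exists k; rewrite H3 andbT (leq_trans H1).
exists k.+1; have -> : t.+1 = s k.+1 by apply/eqP; rewrite eqn_leq H3 H2.
by rewrite leqnn s_lt.
Qed.

Lemma cycle_uniq t k k' : (s k <= t < s k.+1)%N -> (s k' <= t < s k'.+1)%N -> k = k'.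
Proof.
move=> /andP [a1 a2] /andP [b1 b2]; apply/eqP; rewrite eqn_leq; apply/andP; split.
  rewrite leqNgt; apply/negP => H; have := s_mono H; lia.
rewrite leqNgt; apply/negP => H; have := s_mono H; lia.
Qed.

Lemma last_doneE t k : (s k <= t < s k.+1)%N -> last_done e xs t = k.
Proof.
move=> /andP [H1 H2]; apply/eqP; rewrite eqn_leq; apply/andP; split.
  apply/bigmax_leqP => i /= Hi; rewrite leqNgt; apply/negP => Hk.
  by have := s_mono Hk; lia.
have Hk : (k < t.+1)%N by rewrite ltnS (leq_trans (s_ge k)).
exact: (@leq_bigmax_cond _ (fun i : 'I_t.+1 => (s i <= t)%N) (fun i => nat_of_ord i) (Ordinal Hk)).
Qed.

Lemma ageE t k : (s k <= t < s k.+1)%N -> age e xs t = (t - s k.-1)%N.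
Proof. by move=> H; rewrite /age /recv_index (last_doneE H). Qed.


Definition Mx := (\max_(x : X) codelen e x)%N.
Lemma lk_le k : (lk k <= Mx)%N.
Proof. exact: leq_bigmax. Qed.

Lemma age_le t : (age e xs t <= 2 * Mx)%N.
Proof.
have [k Hk] := cycle_ex t; rewrite (ageE Hk).
move: Hk => /andP [H1 H2].
case: k H1 H2 => [|k] H1 H2 /=.
  by move: H2; rewrite sS /= => H2; have := lk_le 0; lia.
move: H2; rewrite !sS => H2; have := lk_le k; have := lk_le k.+1; lia.
Qed.

Variable R : realType.
Definition Gr T : R := \sum_(t < T) (age e xs t)%:R.

Lemma tri (c l p : nat) : (p <= c)%N ->
  2 * \sum_(c <= t < c + l) ((t - p)%N)%:R = 2 * l%:R * (c - p)%:R + l%:R ^+ 2 - l%:R :> R.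
Proof.
move=> pc; elim: l => [|l IH].
  by rewrite addn0 big_geq // mulr0 mul0r !add0r expr0n subr0.
rewrite addnS big_nat_recr /=; last by rewrite leq_addr.
rewrite mulrDr IH natrB; last by rewrite (leq_trans pc) // leq_addr.
rewrite natrB ?natrD -?natr1; [ring | exact: leq_trans pc (leq_addr _ _)].
Qed.

Lemma cyc_sum N : Gr (s N.+1) =
  Gr (s N) + \sum_(s N <= t < s N.+1) ((t - s N.-1)%N)%:R.
Proof.
rewrite /Gr -!(big_mkord xpredT (fun t => (age e xs t)%:R)).
rewrite (big_cat_nat _ (n := s N)) //=; last exact/ltnW/s_lt.
congr (_ + _); apply: eq_big_nat => t Ht.
by rewrite (ageE Ht).
Qed.

Definition lin N : R := \sum_(k < N) (lk k)%:R.
Definition sq N : R := \sum_(k < N) (lk k)%:R ^+ 2.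
Definition cross N : R := \sum_(k < N) (lk k)%:R * (lk k.+1)%:R.

Lemma linE N : lin N = (s N)%:R.
Proof. elim: N => [|N IH]; first by rewrite /lin big_ord0.
by rewrite /lin big_ord_recr -/(lin N) IH sS natrD. Qed.

Lemma Gr_id N : 2 * Gr (s N) + 2 * (lk N)%:R * (s N - s N.-1)%:R =
  2 * cross N + sq N - lin N.
Proof.
elim: N => [|N IH].
  by rewrite /Gr /cross /sq /lin /= !big_ord0 subnn; ring.
rewrite cyc_sum mulrDr sS tri; last by case: N {IH} => [|N] //=; rewrite (leq_trans (ltnW (s_lt N))) // -sS.
rewrite /cross /sq /lin !big_ord_recr /= -/(cross N) -/(sq N) -/(lin N).
have -> : (s N + lk N - s N)%N = lk N by lia.
move: IH; rewrite -/(lk N).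
lra.
Qed.


Lemma s_le k : (s k <= k * Mx)%N.
Proof. elim: k => [|k IH] //; rewrite sS mulSn; have := lk_le k; lia. Qed.

Lemma Gr_bound N T : (s N <= T < s N.+1)%N ->
  Gr (s N) <= Gr T.+1 <= Gr (s N) + 2 * Mx%:R ^+ 2.
Proof.
move=> /andP [H1 H2].
have -> : Gr T.+1 = Gr (s N) + \sum_(s N <= t < T.+1) (age e xs t)%:R.
  rewrite /Gr -!(big_mkord xpredT (fun t => (age e xs t)%:R)).
  by rewrite (big_cat_nat _ (n := s N)) //= ltnW.
rewrite lerDl sumr_ge0 //= lerD2l.
apply: (le_trans (y := \sum_(s N <= t < T.+1) (2 * Mx)%:R)).
  by apply: ler_sum => t _; rewrite ler_nat age_le.
rewrite sumr_const_nat -mulr_natl natrM.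
have : (T.+1 - s N <= Mx)%N by move: H2; rewrite sS; have := lk_le N; lia.
rewrite -(ler_nat R) => HM.
have M0 : 0 <= Mx%:R :> R by [].
nra.
Qed.

Definition avgto (u : nat -> R) (c : R) := forall eps, 0 < eps -> exists N, forall n,
  (N <= n)%N -> `|\sum_(k < n) u k - n%:R * c| <= eps * n%:R.


Lemma aux_u2 (G A B C D x1 x2 x3 y z : R) : `|A - x1| <= y -> `|B - x2| <= y ->
  `|C - x3| <= y -> 2 * G + 2 * D = 2 * C + B - A -> 0 <= D <= z ->
  `|G - (x3 + (x2 - x1) / 2)| <= 2 * y + z.
Proof.
rewrite !ler_norml => /andP [l1' l2] /andP [s1 s2] /andP [c1 c2] Hi /andP [D1 D2].
apply/andP; split; lra.
Qed.

Lemma aux_tri (a g u1 u2 u3 u4 B1 B2 B3 B4 : R) : 0 <= a ->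
  `|u1| <= B1 -> `|u2| <= B2 -> `|u3| <= B3 -> `|u4| <= B4 ->
  `|a * u1 + a * u2 + g * u3 + g * u4| <= a * B1 + a * B2 + `|g| * B3 + `|g| * B4.
Proof.
move=> a0 H1 H2 H3 H4.
apply: (le_trans (ler_normD _ _)); apply: lerD; last by rewrite normrM ler_wpM2l.
apply: (le_trans (ler_normD _ _)); apply: lerD; last by rewrite normrM ler_wpM2l.
apply: (le_trans (ler_normD _ _)); apply: lerD; by rewrite normrM ger0_norm // ler_wpM2l.
Qed.

Lemma aux_fin (a b g G T N d eps M Kg K0 : R) : 1 <= a -> 0 < T -> N <= T -> 0 < eps ->
  g = a ^+ 2 + (b - a) / 2 ->
  `|a * G - g * T| <= a * (2 * M ^+ 2) + a * (2 * (d * N) + M ^+ 2) + `|g| * (d * N) + `|g| * M ->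
  K0 = 3 * a * M ^+ 2 + `|g| * M -> Kg = 2 * a + `|g| -> Kg * d = eps / 2 ->
  2 * K0 <= eps * T ->
  `|G / T - (a + b / (2 * a) - 2^-1)| <= eps.
Proof.
move=> a1 T0 NT e0 gE HX K0E KgE Kd HK.
have a0 : 0 < a by apply: lt_le_trans a1.
have -> : G / T - (a + b / (2 * a) - 2^-1) = (a * G - g * T) / (a * T).
  by rewrite gE; field; rewrite !gt_eqF.
have aT : 0 < a * T by rewrite mulr_gt0.
rewrite normrM normfV (gtr0_norm aT) ler_pdivrMr //.
apply: (le_trans HX).
have -> : a * (2 * M ^+ 2) + a * (2 * (d * N) + M ^+ 2) + `|g| * (d * N) + `|g| * M
   = K0 + (Kg * d) * N by rewrite K0E KgE; ring.
rewrite Kd.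
have : eps * T <= eps * (a * T) by apply: ler_wpM2l; [exact: ltW | rewrite ler_peMl // ltW].
have : eps / 2 * N <= eps / 2 * T by apply: ler_wpM2l => //; rewrite divr_ge0 // ltW.
lra.
Qed.

Lemma T_le N T : (T < s N.+1)%N -> (T <= s N + Mx)%N.
Proof. rewrite sS; have := lk_le N; lia. Qed.

Theorem det_main (a b : R) : 1 <= a ->
  avgto (fun k => (lk k)%:R) a -> avgto (fun k => (lk k)%:R ^+ 2) b ->
  avgto (fun k => (lk k)%:R * (lk k.+1)%:R) (a ^+ 2) ->
  forall eps, 0 < eps -> exists T0, forall T, (T0 <= T)%N ->
    `|Gr T.+1 / T%:R - (a + b / (2 * a) - 2^-1)| <= eps.
Proof.
move=> a1 Hl Hs Hc eps e0.
have a0 : 0 < a by apply: lt_le_trans a1.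
set g := a ^+ 2 + (b - a) / 2.
set Kg := 2 * a + `|g|.
have Kg0 : 0 < Kg by rewrite /Kg ltr_wpDr // mulr_gt0.
set d := eps / (2 * Kg).
have d0 : 0 < d by rewrite /d divr_gt0 // mulr_gt0.
have [N1 HN1] := Hl d d0.
have [N2 HN2] := Hs d d0.
have [N3 HN3] := Hc d d0.
set M := (Mx%:R : R).
have M0 : 0 <= M by [].
set K0 := 3 * a * M ^+ 2 + `|g| * M.
have K00 : 0 <= K0 by rewrite /K0 addr_ge0 // ?mulr_ge0 // ?sqr_ge0 // ltW.
set N0 := maxn N1 (maxn N2 N3).
set T1 := Num.Def.archi_bound (2 * K0 / eps).
have HT1 : 2 * K0 / eps < T1%:R.
  by apply: archi_boundP; rewrite divr_ge0 // ?mulr_ge0 // ltW.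
have Mpos : (0 < Mx)%N by apply: leq_trans (lk_le 0); apply: l1.
exists (maxn ((N0.+1) * Mx) (maxn T1 1)) => T.
rewrite !geq_max => /and3P [HTN HT1' HT0].
have [N /andP [HsN HsN1]] := cycle_ex T.
have NN0 : (N0 <= N)%N.
  have : ((N0.+1) * Mx < N.+1 * Mx)%N by apply: leq_ltn_trans HTN (leq_trans HsN1 (s_le _)).
  by rewrite ltn_pmul2r // ltnS => /ltnW.
have [G1 G2] : Gr (s N) <= Gr T.+1 /\ Gr T.+1 <= Gr (s N) + 2 * M ^+ 2.
  by apply/andP; apply: Gr_bound; rewrite HsN.
have hl := HN1 N (leq_trans (leq_maxl _ _) NN0).
have hs := HN2 N (leq_trans (leq_trans (leq_maxl _ _) (leq_maxr _ _)) NN0).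
have hc := HN3 N (leq_trans (leq_trans (leq_maxr _ _) (leq_maxr _ _)) NN0).
rewrite -/(lin N) -/(sq N) -/(cross N) in hl hs hc.
have hid := Gr_id N.
have hdN : 0 <= ((lk N)%:R * (s N - s N.-1)%:R : R) <= M ^+ 2.
  apply/andP; split; first by rewrite mulr_ge0.
  rewrite /M expr2 -!natrM ler_nat; apply: leq_mul; first exact: lk_le.
  case: N {HsN HsN1 NN0 G1 G2 hl hs hc hid} => [|N] /=; first by [].
  have := lk_le N; rewrite /lk; lia.
have hsN := linE N.
have HT4 : 0 <= (T%:R - (s N)%:R : R) <= M.
  rewrite subr_ge0 ler_nat HsN /=.
  have : (T <= s N + Mx)%N by apply: T_le.
  rewrite -(ler_nat R) natrD -/M; lra.
have NT : N%:R <= T%:R :> R by rewrite ler_nat (leq_trans (s_ge N)).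
have T0 : 0 < T%:R :> R by rewrite ltr0n.
pose u1 := Gr T.+1 - Gr (s N).
pose u2 := Gr (s N) - N%:R * g.
pose u3 := N%:R * a - (s N)%:R.
pose u4 : R := (s N)%:R - T%:R.
have Hu : a * Gr T.+1 - g * T%:R = a * u1 + a * u2 + g * u3 + g * u4.
  by rewrite /u1 /u2 /u3 /u4; ring.
have Hu2 : `|u2| <= 2 * (d * N%:R) + M ^+ 2.
  have -> : u2 = Gr (s N) - (N%:R * a ^+ 2 + (N%:R * b - N%:R * a) / 2) by rewrite /u2 /g; ring.
  rewrite hsN in hl hid; rewrite -mulrA in hid; exact: aux_u2 hl hs hc hid hdN.
have Hu1 : `|u1| <= 2 * M ^+ 2.
  by rewrite ger0_norm /u1 ?subr_ge0 // lerBlDl.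
have Hu3 : `|u3| <= d * N%:R by rewrite /u3 distrC -hsN.
have Hu4 : `|u4| <= M by rewrite /u4 distrC ger0_norm; case/andP: HT4.
have := aux_tri g (ltW a0) Hu1 Hu2 Hu3 Hu4.
rewrite -Hu => HX.
have HKd : Kg * d = eps / 2 by rewrite /d; field; rewrite gt_eqF.
apply: (aux_fin a1 T0 NT e0 (erefl g) HX (erefl K0) (erefl Kg) HKd).
move: HT1; rewrite ltr_pdivrMr // => H.
apply: le_trans (ltW H) _; by rewrite mulrC ler_pM2l // ler_nat.
Qed.


End Det.

End PC.
Import PC.

Module PE.
Set Implicit Arguments. Unset Strict Implicit. Unset Printing Implicit Defensive.
Local Open Scope classical_set_scope.
Local Open Scope ring_scope.

Lemma limn_esup_of_eps (R : realType) (u : nat -> R) (c : R) :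
  (forall eps, 0 < eps -> exists T0, forall T, (T0 <= T)%N -> `|u T - c| <= eps) ->
  limn_esup (fun T => (u T)%:E) = c%:E.
Proof.
move=> H.
have Hc : (fun T => (u T)%:E) @ \oo --> c%:E.
  apply: cvg_EFin; first by apply: nearW.
  apply/cvgrPdist_le => eps e0.
  have [T0 HT0] := H eps e0.
  exists T0 => // T /= HT; rewrite distrC; exact: HT0.
rewrite is_cvg_limn_esupE; last by apply/cvg_ex; exists c%:E.
exact: cvg_lim.
Qed.

End PE.
Import PE.

Module PB.
Set Implicit Arguments. Unset Strict Implicit. Unset Printing Implicit Defensive.
Local Open Scope classical_set_scope.
Local Open Scope ring_scope.

Section Prob.
Variables (d : measure_display) (T : measurableType d) (R : realType)
  (Pr : probability T R) (X : finType) (P : X -> R)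
  (Xs : nat -> T -> X) (e : X -> seq bool) (x0 : X).
Hypothesis mX : forall t x, measurable (Xs t @^-1` [set x]).
Hypothesis PX : forall t x, Pr (Xs t @^-1` [set x]) = (P x)%:E.
Hypothesis ind : mutually_indep Pr Xs.
Hypothesis l1 : forall x, (1 <= codelen e x)%N.

Definition xsw (w : T) := fun t => Xs t w.
Definition Y k w := xsw w (sched e (xsw w) k).
Definition Yseq m w := [seq Y k w | k <- iota 0 m].

Definition tpos (s : seq X) (j : nat) : nat := (\sum_(i < j) codelen e (nth x0 s i))%N.

Lemma tposS s j : tpos s j.+1 = (tpos s j + codelen e (nth x0 s j))%N.
Proof. by rewrite /tpos big_ord_recr. Qed.

Lemma tpos_inj s : injective (tpos s).
Proof.
apply: incn_inj; apply: leq_mono; apply: homo_ltn; first exact: ltn_trans.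
by move=> i; rewrite tposS; have := l1 (nth x0 s i); lia.
Qed.

Lemma sched_tpos w s j : (forall i, (i < j)%N -> Y i w = nth x0 s i) ->
  sched e (xsw w) j = tpos s j.
Proof.
elim: j => [|j IH] H; first by rewrite /tpos big_ord0.
rewrite /= IH; last by move=> i Hi; apply: H; rewrite ltnW.
rewrite tposS; congr (_ + _)%N; congr (codelen e _).
by rewrite -(H j (ltnSn j)) /Y IH // => i Hi; apply: H; rewrite ltnW.
Qed.

Lemma Yseq_cyl m w s : size s = m ->
  (Yseq m w = s <-> forall j, (j < m)%N -> Xs (tpos s j) w = nth x0 s j).
Proof.
move=> Hs; split.
  move=> Hs' j Hj.
  have HY : forall i, (i < m)%N -> Y i w = nth x0 s i.
    by move=> i Hi; rewrite -Hs' (nth_map 0%N) ?size_iota // nth_iota.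
  rewrite -(@sched_tpos w s j); first exact: HY.
  by move=> i Hi; apply: HY; exact: ltn_trans Hj.
move=> H.
have HY : forall j, (j < m)%N -> Y j w = nth x0 s j.
  elim/ltn_ind => j IH Hj.
  rewrite /Y (sched_tpos (s := s)); first exact: H.
  by move=> i Hi; apply: IH => //; exact: ltn_trans Hj.
apply: (@eq_from_nth _ x0); first by rewrite size_map size_iota.
move=> i; rewrite size_map size_iota => Hi.
by rewrite (nth_map 0%N) ?size_iota // nth_iota // add0n HY.
Qed.

Definition Sidx s m := map (tpos s) (iota 0 m).
Definition cyl m s := [set w | Yseq m w = s].

Lemma Sidx_index s m j : (j < m)%N -> index (tpos s j) (Sidx s m) = j.
Proof.
move=> Hj; rewrite /Sidx (index_map (@tpos_inj s)).
have {1}-> : j = nth 0%N (iota 0 m) j by rewrite nth_iota.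
by rewrite index_uniq ?size_iota ?iota_uniq.
Qed.

Lemma uniq_Sidx s m : uniq (Sidx s m).
Proof. by rewrite /Sidx (map_inj_uniq (@tpos_inj s)) iota_uniq. Qed.

Definition Aset s m := fun i => [set nth x0 s (index i (Sidx s m))].

Lemma cylE m s : size s = m ->
  cyl m s = \bigcap_(i in [set` Sidx s m]) (Xs i @^-1` Aset s m i).
Proof.
move=> Hs; apply/seteqP; split => w.
  rewrite /cyl /= (Yseq_cyl w Hs) => H i /= /mapP [j]; rewrite mem_iota add0n => /andP [_ Hj] ->.
  by rewrite /Aset Sidx_index // H.
move=> H; rewrite /cyl /= (Yseq_cyl w Hs) => j Hj.
have Hi : [set` Sidx s m] (tpos s j) by rewrite /= map_f // mem_iota.
by have := H _ Hi; rewrite /Aset Sidx_index.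
Qed.

Lemma cyl_meas m s : size s = m -> measurable (cyl m s).
Proof.
move=> Hs; rewrite cylE //; apply: fin_bigcap_measurable; first exact: finite_seq.
by move=> i _; exact: mX.
Qed.

Lemma cyl_prob m s : size s = m -> Pr (cyl m s) = (\prod_(b <- s) P b)%:E.
Proof.
move=> Hs; rewrite cylE // ind; last exact: uniq_Sidx.
rewrite /Sidx big_map (big_nth x0) Hs -prodEFin /index_iota subn0.
apply: eq_big_seq => j; rewrite mem_iota add0n => /andP [_ Hj].
by rewrite /Aset -/(Sidx s m) Sidx_index // PX.
Qed.

Lemma size_Yseq m w : size (Yseq m w) = m.
Proof. by rewrite size_map size_iota. Qed.

Lemma union_prob m (A : seq X -> bool) (l : seq (seq X)) : uniq l ->
  all (fun s => size s == m) l ->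
  let U := \big[setU/set0]_(s <- l | A s) cyl m s in
  [/\ measurable U, Pr U = (\sum_(s <- l | A s) \prod_(b <- s) P b)%:E &
     forall w, U w <-> (Yseq m w \in l /\ A (Yseq m w))].
Proof.
elim: l => [|s l IH] /=.
  move=> _ _; rewrite !big_nil; split => //; first exact: measure0.
  by move=> w; split => // [[]].
move=> /andP [sl ul] /andP [/eqP Hs al].
have [mU PU UP] := IH ul al.
rewrite !big_cons; case: ifPn => As.
  split.
  - exact: measurableU (cyl_meas Hs) mU.
  - transitivity ((\prod_(b <- s) P b)%:E + (\sum_(j <- l | A j) \prod_(b <- j) P b)%:E);
      last by rewrite EFinD.
    rewrite -(cyl_prob Hs) -PU; apply: measureU => //; first exact: cyl_meas.
    apply/seteqP; split => // w [/= Hw /UP [Hl _]].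
    by move: Hl; rewrite Hw (negbTE sl).
  - move=> w; split.
      case => [/= Hw|/UP [H1 H2]]; first by rewrite Hw in_cons eqxx.
      by rewrite in_cons H1 orbT.
    move=> []; rewrite in_cons => /orP [/eqP H|H] HA; first by left.
    by right; apply/UP.
split => // w; split.
  by move=> /UP [H1 H2]; rewrite in_cons H1 orbT.
move=> []; rewrite in_cons => /orP [/eqP H|H] HA; first by move: As; rewrite -H HA.
by apply/UP.
Qed.

Lemma key m (A : seq X -> bool) :
  measurable [set w | A (Yseq m w)] /\
  Pr [set w | A (Yseq m w)] = (Ex P m (fun s => (A s)%:R))%:E.
Proof.
have al : all (fun s => size s == m) (tuples X m).
  by apply/allP => s; rewrite mem_tuples.
have [mU PU UP] := union_prob A (uniq_tuples X m) al.
have -> : [set w | A (Yseq m w)] = \big[setU/set0]_(s <- tuples X m | A s) cyl m s.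
  apply/seteqP; split => w /=.
    by move=> HA; apply/UP; rewrite mem_tuples size_Yseq eqxx.
  by move=> /UP [].
split => //; rewrite PU Ex_tuples (big_mkcond A); congr (_%:E).
by apply: eq_bigr => s _; case: (A s); rewrite ?mulr1 ?mulr0.
Qed.

Hypothesis P0 : forall x, 0 <= P x.
Hypothesis P1 : \sum_x P x = 1.

Lemma Ev_bound m (A : seq X -> bool) (r : R) : Ex P m (fun s => (A s)%:R) <= r ->
  measurable [set w | A (Yseq m w)] /\ (Pr [set w | A (Yseq m w)] <= r%:E)%E.
Proof. by move=> H; have [mA PA] := key m A; split => //; rewrite PA lee_fin. Qed.

Definition lR (x : X) : R := (codelen e x)%:R.
Definition Q2 (p : X * X) : R := P p.1 * P p.2.
Definition g2 (p : X * X) : R := lR p.1 * lR p.2.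

Lemma Q20 p : 0 <= Q2 p. Proof. by rewrite mulr_ge0. Qed.
Lemma Q21 : \sum_p Q2 p = 1.
Proof.
rewrite -(pair_big predT predT (fun x y => P x * P y)) /=.
under eq_bigr do rewrite -mulr_sumr P1 mulr1.
exact: P1.
Qed.

Lemma nth_Yseq m w i : (i < m)%N -> nth x0 (Yseq m w) i = Y i w.
Proof. by move=> Hi; rewrite (nth_map 0%N) ?size_iota // nth_iota. Qed.

Lemma sum_Yseq m w (g : X -> R) : \sum_(b <- Yseq m w) g b = \sum_(k < m) g (Y k w).
Proof. by rewrite big_map -(big_mkord xpredT (fun k => g (Y k w))) /index_iota subn0. Qed.

Definition Ac (eps : R) n (s : seq X) : bool :=
  (eps * n%:R <= `|\sum_(k < n) lR (nth x0 s k.*2) * lR (nth x0 s k.*2.+1) - n%:R * Emean Q2 g2|).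

Lemma unpair_sum n (s : seq (X * X)) : size s = n ->
  \sum_(k < n) lR (nth x0 (unpair s) k.*2) * lR (nth x0 (unpair s) k.*2.+1)
  = \sum_(p <- s) g2 p.
Proof.
elim: s n => [|p s IH] n <-; first by rewrite big_ord0 big_nil.
rewrite big_ord_recl big_cons /=; congr (_ + _).
by rewrite -(IH (size s)) //; apply: eq_bigr => k _; rewrite /bump /= doubleS.
Qed.

Lemma Ac_bound (eps : R) n : 0 < eps -> (0 < n)%N ->
  Ex P n.*2 (fun s => (Ac eps n s)%:R) <= Kdev Q2 g2 / (eps ^+ 4 * n%:R ^+ 2).
Proof.
move=> e0 n0; rewrite Ex_pair.
rewrite (@Ex_ext _ _ Q2 n _ (fun s => ((eps * n%:R <= `|\sum_(p <- s) g2 p - n%:R * Emean Q2 g2|)%R)%:R)).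
  exact: Ex_dev Q20 Q21 _ _ _ e0 n0.
by move=> s Hs; rewrite /Ac unpair_sum.
Qed.

Lemma Kdev_ge0 (B : finType) (Q : B -> R) (g : B -> R) : (forall b, 0 <= Q b) -> 0 <= Kdev Q g.
Proof.
move=> Q0; rewrite /Kdev; apply: addr_ge0; last by rewrite mulr_ge0 // sqr_ge0.
by apply: sumr_ge0 => b _; rewrite mulr_ge0 // (_ : 4 = 2 * 2)%N // exprM sqr_ge0.
Qed.

Lemma bound_gen (g : X -> R) (eps : R) n : 0 < eps -> (0 < n)%N ->
  Ex P n (fun s => ((eps * n%:R <= `|\sum_(b <- s) g b - n%:R * Emean P g|)%R)%:R)
   <= (Kdev P g / eps ^+ 4) / n%:R ^+ 2.
Proof. by move=> e0 n0; rewrite -mulrA -invfM; exact: Ex_dev. Qed.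

Lemma bound_c (eps : R) n : 0 < eps -> (0 < n)%N ->
  Ex P n.*2 (fun s => (Ac eps n s)%:R) <= (Kdev Q2 g2 / eps ^+ 4) / n%:R ^+ 2.
Proof. by move=> e0 n0; rewrite -mulrA -invfM; exact: Ac_bound. Qed.

Lemma bound_d (eps : R) n : 0 < eps -> (0 < n)%N ->
  Ex P n.*2.+1 (fun s => (Ac eps n (behead s))%:R) <= (Kdev Q2 g2 / eps ^+ 4) / n%:R ^+ 2.
Proof.
move=> e0 n0 /=.
apply: (le_trans (y := \sum_x P x * ((Kdev Q2 g2 / eps ^+ 4) / n%:R ^+ 2))).
  by apply: ler_sum => x _; apply: ler_wpM2l => //; exact: bound_c.
by rewrite -mulr_suml P1 mul1r.
Qed.

Lemma negl_gen (A : nat -> seq X -> bool) (m : nat -> nat) (C : R) : 0 <= C ->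
  (forall n, (0 < n)%N -> Ex P (m n) (fun s => (A n s)%:R) <= C / n%:R ^+ 2) ->
  Pr.-negligible [set w | ~ exists N, forall k, (N <= k)%N -> ~ A k.+1 (Yseq (m k.+1) w)].
Proof.
move=> C0 H.
apply: (BC (F := fun k => [set w | A k.+1 (Yseq (m k.+1) w)]) C0).
  by move=> k; have [] := Ev_bound (H k.+1 isT).
by move=> k; have [] := Ev_bound (H k.+1 isT).
Qed.
End Prob.

End PB.
Import PB.

Module PM.
Set Implicit Arguments. Unset Strict Implicit. Unset Printing Implicit Defensive.
Local Open Scope classical_set_scope.
Local Open Scope ring_scope.

Section Avg.
Variable R : realType.

Lemma avgto_of (u : nat -> R) (c : R) :
  (forall i, exists N, forall k, (N <= k)%N ->
     `|\sum_(j < k.+1) u j - k.+1%:R * c| < (i.+1)%:R^-1 * k.+1%:R) -> avgto u c.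
Proof.
move=> H eps e0.
set i := Num.Def.archi_bound (eps^-1).
have Hi : eps^-1 < i%:R by apply: archi_boundP; rewrite invr_ge0 ltW.
have Hi' : (i.+1)%:R^-1 <= eps.
  rewrite -(invrK eps) lef_pV2 ?posrE ?invr_gt0 ?ltr0n //.
  by rewrite (le_trans (ltW Hi)) // ler_nat.
have [N HN] := H i.
exists N.+1 => [[|k]] // Hk.
apply/ltW; apply: lt_le_trans (HN k Hk) _.
by rewrite ler_wpM2r.
Qed.

Lemma sum_evenodd (u : nat -> R) m :
  \sum_(j < m.*2) u j = \sum_(k < m) u k.*2 + \sum_(k < m) u k.*2.+1.
Proof.
elim: m => [|m IH]; first by rewrite !big_ord0 addr0.
rewrite doubleS !big_ord_recr /= IH; ring.
Qed.

Lemma aux_eo (E O r c m n eps K : R) : 0 < eps ->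
  `|E - m * c| <= eps / 2 * m -> `|O - m * c| <= eps / 2 * m -> `|r| <= K ->
  2 * m <= n -> K <= eps / 2 * n ->
  `|(E - m * c) + (O - m * c) + r| <= eps * n.
Proof.
move=> e0 h1 h2 h3 h4 h5.
apply: le_trans (ler_normD _ _) _.
apply: le_trans (lerD (ler_normD _ _) h3) _.
have : eps / 2 * (2 * m) <= eps / 2 * n by apply: ler_wpM2l => //; rewrite divr_ge0 // ltW.
lra.
Qed.

Lemma avgto_evenodd (u : nat -> R) (c B : R) : (forall k, `|u k| <= B) ->
  avgto (fun k => u k.*2) c -> avgto (fun k => u k.*2.+1) c -> avgto u c.
Proof.
move=> HB He Ho eps e0.
have e2 : 0 < eps / 2 by rewrite divr_gt0.
have [N1 H1] := He _ e2.
have [N2 H2] := Ho _ e2.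
have B0 : 0 <= B by apply: le_trans (HB 0%N); exact: normr_ge0.
set K := B + `|c|.
set T1 := Num.Def.archi_bound (K / (eps / 2)).
have HT1 : K / (eps / 2) < T1%:R.
  by apply: archi_boundP; rewrite divr_ge0 // ?addr_ge0 // ltW.
exists (maxn (maxn N1 N2).*2 T1) => n.
rewrite geq_max => /andP [Hn1 Hn2].
have HK : K <= eps / 2 * n%:R.
  move: HT1; rewrite ltr_pdivrMr // => H; apply: ltW; apply: lt_le_trans H _.
  by rewrite mulrC; apply: ler_wpM2l; [exact: ltW | rewrite ler_nat].
have [m [Hm|Hm]] : exists m, n = m.*2 \/ n = m.*2.+1.
  exists n./2; case: (boolP (odd n)) => Ho'; [right|left];
    by rewrite -{1}(odd_double_half n) ?Ho' // (negbTE Ho').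
- have Hm1 : (N1 <= m)%N by move: Hn1; rewrite Hm leq_double geq_max => /andP [].
  have Hm2 : (N2 <= m)%N by move: Hn1; rewrite Hm leq_double geq_max => /andP [].
  have -> : \sum_(k < n) u k - n%:R * c = ((\sum_(k < m) u k.*2) - m%:R * c) + ((\sum_(k < m) u k.*2.+1) - m%:R * c) + 0.
    by rewrite Hm sum_evenodd -mul2n natrM; ring.
  apply: aux_eo (H1 _ Hm1) (H2 _ Hm2) _ _ HK => //.
    by rewrite normr0; apply: addr_ge0.
  by rewrite Hm -mul2n natrM.
- have e21 : (m.*2.+1)%:R = 2 * m%:R + 1 :> R by rewrite -natr1 -mul2n natrM.
  have Hm1 : (N1 <= m)%N by move: Hn1; rewrite Hm leq_Sdouble geq_max => /andP [].
  have Hm2 : (N2 <= m)%N by move: Hn1; rewrite Hm leq_Sdouble geq_max => /andP [].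
  have -> : \sum_(k < n) u k - n%:R * c = ((\sum_(k < m) u k.*2) - m%:R * c) + ((\sum_(k < m) u k.*2.+1) - m%:R * c) + (u m.*2 - c).
    by rewrite Hm big_ord_recr /= sum_evenodd e21; ring.
  apply: aux_eo (H1 _ Hm1) (H2 _ Hm2) _ _ HK => //.
    by apply: le_trans (ler_normB _ _) _; rewrite lerD2r.
  by rewrite Hm e21 lerDl.
Qed.

End Avg.

Lemma sum1_age (R : realType) (X : finType) (e : X -> seq bool) (xs : nat -> X) T :
  \sum_(1 <= t < T.+1) ((age e xs t)%:R : R) = Gr e xs R T.+1.
Proof.
rewrite /Gr -(big_mkord xpredT (fun t => ((age e xs t)%:R : R))).
by rewrite (big_ltn (m := 0%N)) // {2}/age sub0n add0r.
Qed.


End PM.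
Import PM.

Local Open Scope classical_set_scope.
Local Open Scope ring_scope.

Theorem theorem1 (d : measure_display) (T : measurableType d) (R : realType)
  (Pr : probability T R) (X : finType) (P : X -> R)
  (Xs : nat -> T -> X) (e : X -> seq bool) :
  (1 < #|X|)%N ->
  (forall x, 0 <= P x) -> \sum_(x : X) P x = 1 ->
  (forall t x, measurable (Xs t @^-1` [set x])) ->
  (forall t x, Pr (Xs t @^-1` [set x]) = (P x)%:E) ->
  mutually_indep Pr Xs ->
  prefix_free e ->
  (forall x, (1 <= codelen e x)%N) ->
  let EL := \sum_(x : X) P x * (codelen e x)%:R in
  let EL2 := \sum_(x : X) P x * ((codelen e x)%:R ^+ 2) in
  {ae Pr, forall w : T,
     avg_age R e (fun t => Xs t w) = (EL + EL2 / (2 * EL) - 2^-1)%:E}.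
Proof.
move=> cX P0 P1 mX PX ind _ l1 EL EL2.
have [x0 _] : exists x0 : X, x0 \in X by apply/card_gt0P; exact: ltnW.
have EL1 : 1 <= EL.
  rewrite -P1 /EL; apply: ler_sum => x _.
  by rewrite -{1}(mulr1 (P x)); apply: ler_wpM2l => //; rewrite ler1n.
pose eps i : R := (i.+1)%:R^-1.
have e_gt0 i : 0 < eps i by rewrite invr_gt0 ltr0n.
have C0 (B : finType) (Q : B -> R) g i : (forall b, 0 <= Q b) -> 0 <= Kdev Q g / eps i ^+ 4.
  by move=> Q0; rewrite divr_ge0 ?Kdev_ge0 // exprn_ge0 // ltW.
pose A1 i n (s : seq X) := (eps i * n%:R <= `|\sum_(b <- s) lR R e b - n%:R * Emean P (lR R e)|).
pose A2 i n (s : seq X) := (eps i * n%:R <= `|\sum_(b <- s) (fun x => lR R e x ^+ 2) b - n%:R * Emean P (fun x => lR R e x ^+ 2)|).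
pose A3 i n s := Ac P e x0 (eps i) n s.
pose A4 i n (s : seq X) := Ac P e x0 (eps i) n (behead s).
pose NS (A : nat -> seq X -> bool) (m : nat -> nat) :=
  [set w | ~ exists N, forall k, (N <= k)%N -> ~ A k.+1 (Yseq Xs e (m k.+1) w)].
have n1 i : Pr.-negligible (NS (A1 i) id).
  apply: (negl_gen x0 mX PX ind l1 (C0 _ _ (lR R e) i P0)) => n n0.
  exact: (bound_gen P0 P1 (lR R e) (e_gt0 i) n0).
have n2 i : Pr.-negligible (NS (A2 i) id).
  apply: (negl_gen x0 mX PX ind l1 (C0 _ _ (fun x => lR R e x ^+ 2) i P0)) => n n0.
  exact: (bound_gen P0 P1 (fun x => lR R e x ^+ 2) (e_gt0 i) n0).
have n3 i : Pr.-negligible (NS (A3 i) double).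
  apply: (negl_gen x0 mX PX ind l1 (C0 _ _ (g2 R e) i (Q20 P0))) => n n0.
  exact: (bound_c e x0 P0 P1 (e_gt0 i) n0).
have n4 i : Pr.-negligible (NS (A4 i) (fun n => n.*2.+1)).
  apply: (negl_gen x0 mX PX ind l1 (C0 _ _ (g2 R e) i (Q20 P0))) => n n0.
  exact: (bound_d e x0 P0 P1 (e_gt0 i) n0).
pose Bad := \bigcup_i (NS (A1 i) id `|` NS (A2 i) id `|` NS (A3 i) double `|`
   NS (A4 i) (fun n => n.*2.+1)).
have nBad : Pr.-negligible Bad.
  apply: negligible_bigcup => i.
  by apply: negligibleU; [apply: negligibleU; [apply: negligibleU|]|].
apply: (negligibleS _ nBad) => w /= Hw; apply: contrapT => nB; apply: Hw.
have G i : [/\ exists N, forall k, (N <= k)%N -> ~ A1 i k.+1 (Yseq Xs e k.+1 w),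
    exists N, forall k, (N <= k)%N -> ~ A2 i k.+1 (Yseq Xs e k.+1 w),
    exists N, forall k, (N <= k)%N -> ~ A3 i k.+1 (Yseq Xs e k.+1.*2 w) &
    exists N, forall k, (N <= k)%N -> ~ A4 i k.+1 (Yseq Xs e k.+1.*2.+1 w)].
  have H : ~ (NS (A1 i) id `|` NS (A2 i) id `|` NS (A3 i) double `|`
     NS (A4 i) (fun n => n.*2.+1)) w by move=> H; apply: nB; exists i.
  by split; apply: contrapT => H'; apply: H; [left; left; left | left; left; right | left; right | right].
have EQ2 : Emean (Q2 P) (g2 R e) = EL ^+ 2.
  rewrite /Emean /Q2 /g2 /EL expr2 mulr_suml.
  rewrite -(pair_big predT predT (fun x y => P x * P y * (lR R e x * lR R e y))) /=.
  apply: eq_bigr => x _; rewrite mulr_sumr; apply: eq_bigr => y _.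
  rewrite /lR; ring.
pose xs := Xs^~ w.
have Hl : avgto (fun k => (lk e xs k)%:R) EL.
  apply: avgto_of => i; have [[N HN] _ _ _] := G i; exists N => k Hk.
  have := HN k Hk; rewrite /A1 sum_Yseq => /negP; rewrite -ltNge; exact.
have Hs : avgto (fun k => (lk e xs k)%:R ^+ 2) EL2.
  apply: avgto_of => i; have [_ [N HN] _ _] := G i; exists N => k Hk.
  have := HN k Hk; rewrite /A2 sum_Yseq => /negP; rewrite -ltNge; exact.
have Hc : avgto (fun k => (lk e xs k)%:R * (lk e xs k.+1)%:R) (EL ^+ 2).
  apply: (avgto_evenodd (B := (Mx e)%:R ^+ 2)).
  - move=> k; rewrite ger0_norm ?mulr_ge0 // expr2.
    by apply: ler_pM => //; rewrite ler_nat lk_le.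
  - apply: avgto_of => i; have [_ _ [N HN] _] := G i; exists N => k Hk.
    have := HN k Hk; rewrite /A3 /Ac EQ2 => /negP; rewrite -ltNge.
    congr (`|_ - _| < _); apply: eq_bigr => j _.
    by rewrite !nth_Yseq // ?ltn_double ?ltn_Sdouble // leq_double ltnW.
  - apply: avgto_of => i; have [_ _ _ [N HN]] := G i; exists N => k Hk.
    have := HN k Hk; rewrite /A4 /Ac EQ2 => /negP; rewrite -ltNge.
    congr (`|_ - _| < _); apply: eq_bigr => j _.
    rewrite !nth_behead !nth_Yseq //.
    - by rewrite ltnS -doubleS leq_double.
    - by rewrite ltnS ltn_double.
rewrite /avg_age /avg_age_seq; apply: limn_esup_of_eps => ep ep0.
have [T0 HT] := det_main l1 EL1 Hl Hs Hc ep0.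
by exists T0 => T' HT'; rewrite sum1_age; exact: HT.
Qed.
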